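(* Let $X$ be a finite topological space and $x\in X$. Then for every $y\in X$, $\Psi(y,x)\le |\{a\in X\mid \Psi(x,a)=0\}|$, i.e. the furtherness of any point $y$ from $x$ is at most the number of zeros in the row of $x$ of the furtherness matrix.
   Context: For a finite topological space $X$ and $x\in X$, $U_x$ denotes the minimal open set containing $x$. A nested sequence of open sets around $x$ is a finite sequence $U_0\subsetneq U_1\subsetneq\cdots\subsetneq U_m=X$ of open sets with $U_0=U_x$ such that for each $j$ there is no open set $V$ with $U_j\subsetneq V\subsetneq U_{j+1}$. The furtherness function $\Psi:X\times X\to\{0,1,\dots,|X|-1\}$ is defined by: $\Psi(x,y)$ is the smallest integer $k\ge 0$ such that there exists a nested sequence $(U_j)_{j\ge0}$ of open sets around $x$ with $y\in U_k$. The furtherness matrix of $X=\{a_1,\dots,a_n\}$ has $(i,j)$ entry $\Psi(a_i,a_j)$. *)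

(* Defs.v *)
From mathcomp Require Import all_boot.
From mathcomp Require Import boolp.

Set Implicit Arguments.
Unset Strict Implicit.
Unset Printing Implicit Defensive.

Section FiniteTop.
Variable T : finType.

Definition is_topology (op : {set {set T}}) : Prop :=
  [/\ set0 \in op, [set: T] \in op,
      (forall U V, U \in op -> V \in op -> U :|: V \in op) &
      (forall U V, U \in op -> V \in op -> U :&: V \in op)].

Variable op : {set {set T}}.

Definition minopen (x : T) : {set T} := \bigcap_(U in op | x \in U) U.

Definition cover_step (U V : {set T}) : bool :=
  (U \proper V) && [forall W, (W \in op) ==> ~~ ((U \proper W) && (W \proper V))].

Definition nested_seq (x : T) (s : seq {set T}) : Prop :=
  [/\ all (fun U => U \in op) s,
      head set0 s = minopen x,
      last set0 s = [set: T] &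
      path cover_step (head set0 s) (behead s)].

Definition Psi_pred (x y : T) (k : nat) : bool :=
  `[< exists s, nested_seq x s /\ k < size s /\ y \in nth set0 s k >].

Definition Psi (x y : T) : nat :=
  match pselect (exists k, Psi_pred x y k) with
  | left h => ex_minn h
  | right _ => 0
  end.

End FiniteTop.

(* Main.v *)
Require Import Defs.
From mathcomp Require Import all_boot.
From mathcomp Require Import boolp.

Set Implicit Arguments.
Unset Strict Implicit.
Unset Printing Implicit Defensive.

Section Aux.
Variable T : finType.
Variable op : {set {set T}}.
Hypothesis Htop : is_topology op.

Lemma minopen_open x : minopen op x \in op.
Proof.
case: Htop => _ HT _ HI.
rewrite /minopen; apply: (big_ind (fun S => S \in op)) => //.
by move=> i /andP[].
Qed.

Lemma minopen_mem x : x \in minopen op x.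
Proof. by apply/bigcapP => i /andP[]. Qed.

Lemma chain_ex n : forall U V, U \in op -> V \in op -> U \subset V ->
  #|V :\: U| <= n ->
  exists s, [/\ all (fun W => W \in op) s, path (cover_step op) U s,
     last U s = V & size s <= #|V :\: U|].
Proof.
elim: n => [|n IH] U V HU HV HUV Hn.
  exists [::]; split => //=.
  move: Hn; rewrite leqn0 cards_eq0 setD_eq0 => HVU.
  by apply/eqP; rewrite eqEsubset HUV.
case: (boolP (V \subset U)) => HVU.
  by exists [::]; split => //=; apply/eqP; rewrite eqEsubset HUV.
have HP : (V \in op) && (U \proper V) && (V \subset V).
  by rewrite HV properE HUV HVU subxx.
case: (@arg_minnP _ V (fun W : {set T} => (W \in op) && (U \proper W) && (W \subset V)) (fun W => #|W|) HP) => W /andP[/andP[HW HUW] HWV] Hmin.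
have step : cover_step op U W.
  rewrite /cover_step HUW /=; apply/forallP => W'; apply/implyP => HW'.
  apply/negP => /andP[HUW' HW'W].
  have H1 : (W' \in op) && (U \proper W') && (W' \subset V).
    by rewrite HW' HUW' (subset_trans (proper_sub HW'W) HWV).
  have := Hmin _ H1; rewrite leqNgt => /negP; apply.
  exact: proper_card.
have Hlt : #|V :\: W| < #|V :\: U|.
  apply: proper_card; rewrite properE; apply/andP; split.
    by apply: setDS; exact: proper_sub.
  move: HUW; rewrite properE => /andP[_ /subsetPn [z zW zU]].
  apply/subsetPn; exists z; first by rewrite inE zU (subsetP HWV).
  by rewrite inE zW.
have [s [Hs1 Hs2 Hs3 Hs4]] := IH W V HW HV HWV (leq_trans Hlt Hn).
exists (W :: s); split => /=.
- by rewrite HW Hs1.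
- by rewrite step Hs2.
- exact: Hs3.
- exact: leq_ltn_trans Hs4 Hlt.
Qed.

Lemma chain_ex' U V : U \in op -> V \in op -> U \subset V ->
  exists s, [/\ all (fun W => W \in op) s, path (cover_step op) U s,
     last U s = V & size s <= #|V :\: U|].
Proof. by move=> *; apply: (@chain_ex #|V :\: U|). Qed.

Lemma Psi_le x y k : Psi_pred op x y k -> Psi op x y <= k.
Proof.
move=> H; rewrite /Psi; case: pselect => [h|[]]; last by exists k.
by case: ex_minnP => m _ ; apply.
Qed.

Lemma key x y : exists k, k <= #|minopen op x| /\ Psi_pred op y x k.
Proof.
case: Htop => H0 HT HU HI.
set V := minopen op y :|: minopen op x.
have HV : V \in op by apply: HU; apply: minopen_open.
have [s1 [A1 P1 L1 S1]] := chain_ex' (minopen_open y) HV (subsetUl _ _).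
have [s2 [A2 P2 L2 S2]] := chain_ex' HV HT (subsetT V).
exists (size s1); split.
  apply: (leq_trans S1); apply: subset_leq_card; apply/subsetP => z.
  by rewrite !inE => /andP[/negbTE -> /=].
apply/asboolP; exists (minopen op y :: s1 ++ s2); split; last split.
- split => /=.
  + by rewrite minopen_open all_cat A1 A2.
  + by [].
  + by rewrite last_cat L1 L2.
  + by rewrite cat_path P1 L1 P2.
- by rewrite /= size_cat ltnS leq_addr.
- rewrite -cat_cons nth_cat /= ltnSn.
  have -> : nth set0 (minopen op y :: s1) (size s1) = last (minopen op y) s1.
    by rewrite (nth_last set0 (minopen op y :: s1)).
  by rewrite L1 !inE minopen_mem orbT.
Qed.

Lemma zero_row x : minopen op x \subset [set a | Psi op x a == 0].
Proof.
case: Htop => H0 HT HU HI.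
have [s2 [A2 P2 L2 S2]] := chain_ex' (minopen_open x) HT (subsetT _).
apply/subsetP => a Ha; rewrite inE -leqn0; apply: Psi_le.
apply/asboolP; exists (minopen op x :: s2); split => //.
by split => //=; rewrite minopen_open A2.
Qed.

End Aux.

Theorem mainTheorem16 (T : finType) (op : {set {set T}}) (Htop : is_topology op)
  (x : T) :
  forall y : T, Psi op y x <= #|[set a : T | Psi op x a == 0]|.
Proof.
move=> y; have [k [Hk HP]] := key Htop x y.
apply: leq_trans (Psi_le HP) _.
exact: leq_trans Hk (subset_leq_card (zero_row Htop x)).
Qed.
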